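(* Let $S\subseteq N$ be an $n$-switchable set and let $T_1,\dots,T_l$ be its equivalence classes for the relation of being connected in $S$. Then: (1) each $T_i$ is of the form $T_i=T_{i1}\times\cdots\times T_{in}$ for some subsets $T_{ij}\subseteq[r_j]$; (2) if $a\in T_i$, $b\in N$, $j\in[n]$ and ${\rm s}(j,a,b)\in S$, then ${\rm s}(j,a,b)\in T_i$; (3) if $i\neq j$ in $[l]$, there exist distinct $p_1,\dots,p_m\in[n]$ with $m\ge 3$ such that $T_{ip_k}\cap T_{jp_k}=\emptyset$ for all $k=1,\dots,m$.
   Context: Fix positive integers $n, r_1,\dots,r_n$ and let $N=[r_1]\times\cdots\times[r_n]$. For $a,b\in N$ and $i\in[n]$, ${\rm s}(i,a,b)\in N$ has $i$-th component $b_i$ and other components equal to those of $a$. Let $d(a,b)=\#\{j: a_j\neq b_j\}$. A subset $S\subseteq N$ is $n$-switchable if for all $a,b\in S$ with $d(a,b)=2$ and all $i\in[n]$, ${\rm s}(i,a,b)\in S$. Elements $a,b\in S$ are connected in $S$ if there are $a_0=a,\dots,a_k=b$ in $S$ with $d(a_{j-1},a_j)\le 1$ for all $j$. *)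

(* Defs.v *)
From mathcomp Require Import all_boot all_order.
Set Implicit Arguments. Unset Strict Implicit. Unset Printing Implicit Defensive.

(* Points are functions 'I_n -> nat; coordinate i ranges over
   [r_i] represented as {0, ..., r i - 1}. *)
Definition pt (n : nat) := {ffun 'I_n -> nat}.

Definition inN (n : nat) (r : 'I_n -> nat) (a : pt n) : bool :=
  [forall i, a i < r i].

Definition sw (n : nat) (i : 'I_n) (a b : pt n) : pt n :=
  [ffun j => if j == i then b j else a j].

Definition dist (n : nat) (a b : pt n) : nat := #|[pred j | a j != b j]|.

Definition switchable (n : nat) (S : pt n -> Prop) : Prop :=
  forall a b : pt n, S a -> S b -> dist a b = 2 -> forall i : 'I_n, S (sw i a b).

Definition connected_in (n : nat) (S : pt n -> Prop) (a b : pt n) : Prop :=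
  exists p : seq (pt n),
    [/\ S a, (forall x, x \in p -> S x),
        path (fun x y => dist x y <= 1) a p & last a p = b].

(* Main.v *)
From Stdlib Require Import ClassicalEpsilon.
Require Import Defs.
From mathcomp Require Import all_boot all_order.
Set Implicit Arguments. Unset Strict Implicit. Unset Printing Implicit Defensive.

Section S.
Variable n : nat.
Implicit Types a b x y z u v : pt n.

Lemma dist_sym x y : dist x y = dist y x.
Proof. by apply: eq_card => j; rewrite !inE eq_sym. Qed.

Lemma dist_sw x y (j : 'I_n) : dist x (sw j x y) <= 1.
Proof.
rewrite /dist -(card1 j); apply: subset_leq_card; apply/subsetP => k.
rewrite !inE ffunE; case: (k =P j) => // _; by rewrite eqxx.
Qed.

Lemma dist0 x y : dist x y = 0 -> x = y.
Proof.
move/card0_eq => H; apply/ffunP => j; move: (H j); rewrite !inE.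
by case: eqP.
Qed.

Lemma dist_le1_only x y q : dist x y <= 1 -> x q != y q ->
  forall j, j != q -> x j = y j.
Proof.
move=> Hd Hq j Hj; apply/eqP; apply: contraTT Hd => Hne.
rewrite -ltnNge /dist.
have <- : #|[set j; q]| = 2 by rewrite cards2 Hj.
apply: subset_leq_card; apply/subsetP => k; rewrite !inE.
by case/orP => /eqP ->.
Qed.

Lemma dist_le2 x y u v q :
  (forall j, v j != u j -> j = q \/ x j != y j) -> dist v u <= 1 + dist x y.
Proof.
move=> H; rewrite /dist.
apply: (leq_trans (subset_leq_card (B := [predU pred1 q & [pred j | x j != y j]]) _)).
  apply/subsetP => k; rewrite !inE => /H [->|->]; by rewrite ?eqxx ?orbT.
have := cardUI (pred1 q) [pred j | x j != y j]; rewrite card1 => <-.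
exact: leq_addr.
Qed.

Lemma dist_pos x y : 0 < dist x y -> exists q, x q != y q.
Proof.
rewrite /dist => H; case: (pickP [pred j | x j != y j]) => [q Hq|H0].
  by exists q.
by move: H; rewrite (eq_card0 H0).
Qed.


Variable S : pt n -> Prop.
Hypothesis swS : switchable S.

Definition Pmix x y := forall z, (forall j, z j = x j \/ z j = y j) -> S z.

Lemma sw_eq_z z q : z q != (sw q z z) q -> False.
Proof. by rewrite ffunE eqxx eqxx. Qed.

Lemma lemA x a y : S x -> dist x a <= 1 -> Pmix a y -> Pmix x y.
Proof.
move=> Sx Hxa Pa.
suff H : forall k z, dist z x <= k -> (forall j, z j = x j \/ z j = y j) -> S z.
  by move=> z Hz; apply: (H _ z (leqnn _) Hz).
elim=> [|k IH] z Hd Hz.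
  by move: Hd; rewrite leqn0 => /eqP /dist0 ->.
case: (posnP (dist z x)) => [/dist0 -> //|/dist_pos [q Hq]].
pose v := sw q z x.
pose u : pt n := [ffun j => if z j == x j then a j else y j].
have Hvx : dist v x <= k.
  move: Hd; rewrite /dist (cardD1 q) inE Hq add1n ltnS; apply: leq_trans.
  rewrite leq_eqVlt; apply/orP; left; apply/eqP; apply: eq_card => j.
  rewrite !inE /v ffunE; case: (j =P q) => [->|_] /=; by rewrite ?eqxx.
have Sv : S v.
  apply: (IH v Hvx) => j; rewrite /v ffunE; case: (j =P q) => _; [by left | exact: Hz].
have Su : S u.
  apply: Pa => j; rewrite /u ffunE; case: (z j == x j); [by left | by right].
have Hzq : z q = y q by case: (Hz q) => // E; move: Hq; rewrite E eqxx.
have Hvu : dist v u <= 2.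
  apply: (leq_trans (dist_le2 (x := x) (y := a) _)); last by rewrite add1n ltnS.
  move=> j; rewrite /v /u !ffunE; case: (j =P q) => [->|_]; first by left.
  case: (z j =P x j) => [->|Ne]; first by right.
  case: (Hz j) => E; by [rewrite E in Ne|rewrite E eqxx].
have Hqvu : v q != u q by rewrite /v /u !ffunE eqxx (negbTE Hq) -Hzq eq_sym.
have Ez : z = sw q v u.
  apply/ffunP => j; rewrite !ffunE; case: (j =P q) => [->|_].
    by rewrite (negbTE Hq) Hzq.
  by rewrite /v ?ffunE; case: (j =P q).
move: Hvu; rewrite leq_eqVlt => /orP [/eqP H2|H1].
  by rewrite Ez; apply: swS.
have Hon := dist_le1_only H1 Hqvu.
have -> : z = u.
  apply/ffunP => j; case: (j =P q) => [->|/eqP Nj].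
    by rewrite /u ffunE (negbTE Hq).
  by rewrite -Hon // /v ffunE (negbTE Nj).
done.
Qed.


Notation conn := (connected_in S).

Lemma conn_refl x : S x -> conn x x.
Proof. by move=> Sx; exists [::]. Qed.

Lemma conn_S x y : conn x y -> S x /\ S y.
Proof.
case=> p [Sx Hp _ <-]; split => //.
have := mem_last x p; rewrite inE => /orP [/eqP ->//|]; exact: Hp.
Qed.

Lemma conn_step w x z : conn w x -> S z -> dist x z <= 1 -> conn w z.
Proof.
case=> p [Sw Hp Hpa Hl] Sz Hd; exists (rcons p z); split => //.
- by move=> t; rewrite mem_rcons inE => /orP [/eqP ->|]; [|apply: Hp].
- by rewrite rcons_path Hpa Hl.
- by rewrite last_rcons.
Qed.

Lemma conn_trans x y z : conn x y -> conn y z -> conn x z.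
Proof.
move=> Hxy [p [Sy Hp Hpa <-]].
elim: p y Sy Hp Hpa Hxy => [|c p IH] y Sy Hp Hpa Hxy //=.
move: Hpa => /= /andP [Hyc Hpa].
apply: IH => //.
- by apply: Hp; rewrite inE eqxx.
- by move=> t Ht; apply: Hp; rewrite inE Ht orbT.
- by apply: conn_step Hxy _ Hyc; apply: Hp; rewrite inE eqxx.
Qed.

Lemma conn_sym x y : conn x y -> conn y x.
Proof.
case=> p [Sx Hp Hpa <-].
elim: p x Sx Hp Hpa => [|c p IH] x Sx Hp Hpa /=; first exact: conn_refl.
move: Hpa => /= /andP [Hxc Hpa].
have Sc : S c by apply: Hp; rewrite inE eqxx.
apply: conn_step (IH c Sc _ Hpa) Sx _.
  by move=> t Ht; apply: Hp; rewrite inE Ht orbT.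
by rewrite dist_sym.
Qed.

Lemma lemB x y : conn x y -> Pmix x y.
Proof.
case=> p [Sx Hp Hpa <-].
elim: p x Sx Hp Hpa => [|c p IH] x Sx Hp Hpa /=.
  move=> z Hz; have -> // : z = x by apply/ffunP => j; case: (Hz j).
move: Hpa => /= /andP [Hxc Hpa].
have Sc : S c by apply: Hp; rewrite inE eqxx.
apply: lemA Sx Hxc (IH c Sc _ Hpa).
by move=> t Ht; apply: Hp; rewrite inE Ht orbT.
Qed.

Lemma conn_sw a0 w y q : conn a0 w -> conn a0 y -> conn a0 (sw q w y).
Proof.
move=> Hw Hy.
have Hwy : conn w y by apply: conn_trans (conn_sym Hw) Hy.
apply: conn_step Hw _ (dist_sw _ _ _).
apply: (lemB Hwy) => j; rewrite ffunE; case: (j == q); by [right|left].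
Qed.
End S.

Definition pb (P : Prop) : bool := if excluded_middle_informative P then true else false.
Lemma pbP (P : Prop) : reflect P (pb P).
Proof. by rewrite /pb; case: excluded_middle_informative => H; constructor. Qed.

Theorem theorem5p1 (n : nat) (r : 'I_n -> nat) (S : pt n -> Prop) :
  0 < n -> (forall i, 0 < r i) ->
  (forall a, S a -> inN r a) ->
  switchable S ->
  (* (1) the class of a0 is a product of subsets T_j of [r_j] *)
  (forall a0, S a0 ->
     exists T : 'I_n -> pred nat,
       (forall j x, T j x -> x < r j) /\
       (forall x : pt n, connected_in S a0 x <-> (forall j, T j (x j)))) /\
  (* (2) closure of classes under switches staying in S *)
  (forall a0 a b (j : 'I_n), S a0 -> connected_in S a0 a -> inN r b ->
     S (sw j a b) -> connected_in S a0 (sw j a b)) /\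
  (* (3) two distinct classes have disjoint factors in >= 3 coordinates *)
  (forall a0 b0, S a0 -> S b0 -> ~ connected_in S a0 b0 ->
     exists P : {set 'I_n}, 3 <= #|P| /\
       forall p, p \in P -> forall x y : pt n,
         connected_in S a0 x -> connected_in S b0 y -> x p <> y p).
Proof.
move=> _ _ SN swS; split; [|split].
- move=> a0 Sa0.
  exists (fun j v => pb (exists x, connected_in S a0 x /\ x j = v)); split.
    move=> j v /pbP [x [Hx <-]]; have [_ Sx] := conn_S Hx.
    by move: (SN _ Sx) => /forallP.
  move=> x; split.
    by move=> Hx j; apply/pbP; exists x.
  move=> HT.
  suff H : forall k, k <= n ->
      connected_in S a0 [ffun j : 'I_n => if j < k then x j else a0 j].
    have -> : x = [ffun j : 'I_n => if j < n then x j else a0 j].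
      by apply/ffunP => j; rewrite ffunE ltn_ord.
    exact: H.
  elim=> [|k IH] Hk.
    have -> : [ffun j : 'I_n => if j < 0 then x j else a0 j] = a0.
      by apply/ffunP => j; rewrite ffunE.
    exact: conn_refl.
  pose i := Ordinal Hk.
  have [xi [Hxi Exi]] := pbP _ (HT i).
  have -> : [ffun j : 'I_n => if j < k.+1 then x j else a0 j]
          = sw i [ffun j : 'I_n => if j < k then x j else a0 j] xi.
    apply/ffunP => j; rewrite !ffunE; case: (j =P i) => [->|/eqP Nj].
      by rewrite /= ltnSn Exi.
    rewrite ltnS leq_eqVlt.
    have -> : (nat_of_ord j == k) = false.
      by apply/negP => /eqP E; move: Nj; rewrite -(inj_eq val_inj) /= E eqxx.
    by [].
  apply: conn_sw => //; apply: IH; exact: ltnW.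
- move=> a0 a b j _ Ha _ Hs; exact: conn_step Ha Hs (dist_sw _ _ _).
- move=> a0 b0 Sa0 Sb0 Nab.
  pose D (p : 'I_n) := exists x y, connected_in S a0 x /\ connected_in S b0 y /\ x p = y p.
  exists [set p | ~~ pb (D p)]; split; last first.
    move=> p; rewrite inE => /pbP ND x y Hx Hy E; apply: ND; by exists x, y.
  case: leqP => // Hle; exfalso.
  have H : forall k, k <= n -> exists x y, [/\ connected_in S a0 x, connected_in S b0 y &
      forall j : 'I_n, j < k -> pb (D j) -> x j = y j].
    elim=> [|k IH] Hk.
      by exists a0, b0; split; [exact: conn_refl|exact: conn_refl|].
    have [x [y [Hx Hy Hxy]]] := IH (ltnW Hk).
    pose i := Ordinal Hk.
    case: (pbP (D i)) => [[x' [y' [Hx' [Hy' E]]]]|ND].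
      exists (sw i x x'), (sw i y y'); split; [exact: conn_sw|exact: conn_sw|].
      move=> j; rewrite !ffunE; case: (j =P i) => [->//|/eqP Nj].
      rewrite ltnS leq_eqVlt => /orP [/eqP Ejk|]; last exact: Hxy.
      by move: Nj; rewrite -(inj_eq val_inj) /= Ejk eqxx.
    exists x, y; split => // j; rewrite ltnS leq_eqVlt => /orP [/eqP Ejk|]; last exact: Hxy.
    have -> : j = i by apply: val_inj.
    by move/pbP.
  have [x [y [Hx Hy Hxy]]] := H n (leqnn n).
  have Hd : dist x y <= 2.
    rewrite /dist; apply: (leq_trans _ Hle); apply: subset_leq_card.
    apply/subsetP => j; rewrite !inE; apply: contraNN => Dj.
    by rewrite Hxy // ltn_ord.
  have [_ Sy] := conn_S Hy.
  have [_ Sx] := conn_S Hx.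
  have Cy : connected_in S a0 y -> False.
    by move=> Hay; apply: Nab; apply: conn_trans Hay (conn_sym Hy).
  move: Hd; rewrite leq_eqVlt => /orP [/eqP H2|H1]; last first.
    by apply: Cy; apply: conn_step Hx Sy H1.
  have [q Hq] : exists q, x q != y q by apply: dist_pos; rewrite H2.
  have Sz : S (sw q x y) by apply: swS.
  have Hz := conn_step Hx Sz (dist_sw _ _ _).
  apply: Cy; apply: conn_step Hz Sy _.
  move: H2; rewrite /dist (cardD1 q) inE Hq add1n => [[<-]].
  apply: subset_leq_card; apply/subsetP => j; rewrite !inE ffunE.
  by case: (j =P q) => [->|_]; rewrite ?eqxx.
Qed.
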